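(* Consider the robust matrix completion iteration described in the context (instantiated with $l_{g,c}$ being any of the HOW, HOC or HOP functions). Then the real sequence $\big\{\mathcal{L}_{g,c^k}(\mathbf U^k,\mathbf V^k,\mathbf S^k)\big\}_{k\ge1}$ converges.
   Context: Data: a matrix $\mathbf X\in\mathbb{R}^{m\times n}$, an index set $\Omega\subset\{1,\dots,m\}\times\{1,\dots,n\}$ of observed entries, a target rank $r\ll\min(m,n)$. For a matrix $\mathbf A$, $\mathbf A_\Omega$ keeps the entries with indices in $\Omega$ and sets the others to $0$. Loss functions: for $c>0$ and a continuous, nondecreasing, differentiable function $g$ on $(0,\infty)$ with $g'(c)>0$, set $a=c/g'(c)$, $b=c^2/2-a\,g(c)$ and $l_{g,c}(x)=x^2/2$ if $|x|\le c$, $l_{g,c}(x)=a\,g(|x|)+b$ if $|x|>c$. The three instances are: HOW ($g(x)=\frac{\sigma^2}{2}(1-e^{-x^2/\sigma^2})$, $\sigma>0$), HOC ($g(x)=\frac{\gamma^2}{2}\ln(1+x^2/\gamma^2)$, $\gamma>0$), HOP ($g(x)=|x|^p$, $0<p\le1$). In each case $x\mapsto x^2/2-l_{g,c}(x)$ is convex and differentiable. Define $\varphi_{g,c}(y)=\sup_{t}[l_{g,c}(t)-(t-y)^2/2]$ and $P_{\varphi_{g,c}}(x)=\max\{0,|x|-a\,g'(|x|)\}\operatorname{sign}(x)$ (value $0$ at $x=0$), the minimizer of $y\mapsto (x-y)^2/2+\varphi_{g,c}(y)$. For matrices, $l_{g,c}$, $\varphi_{g,c}$ are summed entrywise and $P_{\varphi_{g,c}}$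 acts entrywise. Objective: $\mathcal{L}_{g,c}(\mathbf U,\mathbf V,\mathbf S)=\tfrac12\|\mathbf X_\Omega-(\mathbf U\mathbf V)_\Omega-\mathbf S_\Omega\|_F^2+\sum_{(i,j)\in\Omega}\varphi_{g,c}(S_{ij})$ for $\mathbf U\in\mathbb{R}^{m\times r}$, $\mathbf V\in\mathbb{R}^{r\times n}$, $\mathbf S\in\mathbb{R}^{m\times n}$ with $\mathbf S_{\Omega^c}=\mathbf 0$. Iteration (given initial $\mathbf U^0,\mathbf V^0$, a constant $\xi>0$, and $c^{-1}=+\infty$): for $k=0,1,2,\dots$: (i) $\mathbf D^k=\mathbf X-\mathbf U^k\mathbf V^k$; $d^k=\mathrm{IQR}(\mathrm{vec}(\mathbf D^k_\Omega))/1.349$ where IQR is the sample interquartile range of the entries indexed by $\Omega$; $c^k=\min\{\xi d^k,c^{k-1}\}$. (ii) $\mathbf S^{k+1}_\Omega=P_{\varphi_{g,c^k}}(\mathbf D^k_\Omega)$, $\mathbf S^{k+1}_{\Omega^c}=\mathbf 0$; $\mathbf H=\mathbf X_\Omega-\mathbf S^{k+1}_\Omega$. (iii) With $h(\mathbf U,\mathbf V)=\tfrac12\|\mathbf H_\Omega-(\mathbf U\mathbf V)_\Omega\|_F^2$, $\nabla_{\mathbf U}h=-(\mathbf H_\Omega-(\mathbf U\mathbf V)_\Omega)\mathbf V^T$, $\nabla_{\mathbf V}h=-\mathbf U^T(\mathbf H_\Omega-(\mathbf U\mathbf V)_\Omega)$: set $\widetilde\nabla_{\mathbf U}=\nabla_{\mathbf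 U}h(\mathbf U^k,\mathbf V^k)(\mathbf V^k\mathbf V^{kT})^{-1}$, $\mu_{\mathbf U}=\langle\nabla_{\mathbf U}h,\widetilde\nabla_{\mathbf U}\rangle/\|(\widetilde\nabla_{\mathbf U}\mathbf V^k)_\Omega\|_F^2$, $\mathbf U^{k+1}=\mathbf U^k-\mu_{\mathbf U}\widetilde\nabla_{\mathbf U}$; then $\widetilde\nabla_{\mathbf V}=(\mathbf U^{k+1T}\mathbf U^{k+1})^{-1}\nabla_{\mathbf V}h(\mathbf U^{k+1},\mathbf V^k)$, $\mu_{\mathbf V}=\langle\nabla_{\mathbf V}h,\widetilde\nabla_{\mathbf V}\rangle/\|(\mathbf U^{k+1}\widetilde\nabla_{\mathbf V})_\Omega\|_F^2$, $\mathbf V^{k+1}=\mathbf V^k-\mu_{\mathbf V}\widetilde\nabla_{\mathbf V}$ (scaled alternating steepest descent). *)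

(* Defs.v *)
From HB Require Import structures.
From mathcomp Require Import all_boot all_order all_algebra.
From mathcomp Require Import all_classical all_reals all_analysis.

Set Implicit Arguments.
Unset Strict Implicit.
Unset Printing Implicit Defensive.

Import Order.TTheory GRing.Theory Num.Theory.
Import numFieldNormedType.Exports.
Local Open Scope ring_scope.
Local Open Scope classical_set_scope.

Section RMC.
Variable R : realType.

Inductive rmc_gkind := HOW of R | HOC of R | HOP of R.

Definition rmc_gkind_ok (K : rmc_gkind) : Prop :=
  match K with
  | HOW s => 0 < s
  | HOC t => 0 < t
  | HOP p => 0 < p /\ p <= 1
  end.

Definition rmc_gfun (K : rmc_gkind) (x : R) : R :=
  match K with
  | HOW s => s ^+ 2 / 2 * (1 - expR (- (x ^+ 2 / s ^+ 2)))
  | HOC t => t ^+ 2 / 2 * ln (1 + x ^+ 2 / t ^+ 2)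
  | HOP p => `|x| `^ p
  end.

Definition rmc_dgfun (K : rmc_gkind) (x : R) : R :=
  match K with
  | HOW s => x * expR (- (x ^+ 2 / s ^+ 2))
  | HOC t => x / (1 + x ^+ 2 / t ^+ 2)
  | HOP p => p * x `^ (p - 1)
  end.

Definition rmc_acoef (K : rmc_gkind) (c : R) : R := c / rmc_dgfun K c.
Definition rmc_bcoef (K : rmc_gkind) (c : R) : R := c ^+ 2 / 2 - rmc_acoef K c * rmc_gfun K c.

Definition rmc_lgc (K : rmc_gkind) (c x : R) : R :=
  if `|x| <= c then x ^+ 2 / 2 else rmc_acoef K c * rmc_gfun K `|x| + rmc_bcoef K c.

Definition rmc_phigc (K : rmc_gkind) (c y : R) : R :=
  sup [set rmc_lgc K c t - (t - y) ^+ 2 / 2 | t in [set: R]].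

Definition rmc_proxgc (K : rmc_gkind) (c x : R) : R :=
  if x == 0 then 0
  else Num.max 0 (`|x| - rmc_acoef K c * rmc_dgfun K `|x|) * Num.sg x.

Definition rmc_maskO m n (Om : {set 'I_m * 'I_n}) (A : 'M[R]_(m, n)) : 'M[R]_(m, n) :=
  \matrix_(i, j) (if (i, j) \in Om then A i j else 0).

Definition rmc_frob2 m n (A : 'M[R]_(m, n)) : R := \sum_i \sum_j A i j ^+ 2.

Definition rmc_minner m n (A B : 'M[R]_(m, n)) : R := \sum_i \sum_j A i j * B i j.

Definition rmc_Lobj (K : rmc_gkind) (c : R) m n r (X : 'M[R]_(m, n))
  (Om : {set 'I_m * 'I_n}) (U : 'M[R]_(m, r)) (V : 'M[R]_(r, n))
  (S : 'M[R]_(m, n)) : R :=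
  2^-1 * rmc_frob2 (rmc_maskO Om X - rmc_maskO Om (U *m V) - rmc_maskO Om S)
  + \sum_(p in Om) rmc_phigc K c (S p.1 p.2).

(* Sample quantile (linear interpolation between order statistics, i.e. the
   "type 7" convention): for sorted x_0 <= ... <= x_{N-1} and q = k/4,
   h = (N-1) k / 4, Q = x_{floor h} + (h - floor h)(x_{floor h + 1} - x_{floor h}). *)
Definition rmc_quartile (s : seq R) (k : nat) : R :=
  let t := sort <=%R s in
  let h := ((size t).-1 * k)%N in
  let i := (h %/ 4)%N in
  let fr := ((h %% 4)%:R / 4 : R) in
  t`_i + fr * (t`_i.+1 - t`_i).

Definition rmc_iqr (s : seq R) : R := rmc_quartile s 3 - rmc_quartile s 1.

Definition rmc_entriesO m n (Om : {set 'I_m * 'I_n}) (A : 'M[R]_(m, n)) : seq R :=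
  [seq A p.1 p.2 | p <- enum Om].

Definition rmc_dscale m n (Om : {set 'I_m * 'I_n}) (D : 'M[R]_(m, n)) : R :=
  rmc_iqr (rmc_entriesO Om D) / (1349%:R / 1000%:R).

Definition rmc_gradU m n r (Om : {set 'I_m * 'I_n}) (H : 'M[R]_(m, n))
  (U : 'M[R]_(m, r)) (V : 'M[R]_(r, n)) : 'M[R]_(m, r) :=
  - ((rmc_maskO Om H - rmc_maskO Om (U *m V)) *m V^T).

Definition rmc_gradV m n r (Om : {set 'I_m * 'I_n}) (H : 'M[R]_(m, n))
  (U : 'M[R]_(m, r)) (V : 'M[R]_(r, n)) : 'M[R]_(r, n) :=
  - (U^T *m (rmc_maskO Om H - rmc_maskO Om (U *m V))).

End RMC.

(* Main.v *)
Require Import Defs.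
From HB Require Import structures.
From mathcomp Require Import all_boot all_order all_algebra.
From mathcomp Require Import all_classical all_reals all_analysis.
From mathcomp Require Import ring lra.
Import Order.TTheory GRing.Theory Num.Theory.
Import numFieldNormedType.Exports.
Local Open Scope classical_set_scope.
Local Open Scope ring_scope.

Section K.
Variable R : realType.

Lemma der_sq_div (s x : R) :
  is_derive x 1 (fun y : R => y ^+ 2 / s ^+ 2) (2 * x / s ^+ 2).
Proof.
have -> : (fun y : R => y ^+ 2 / s ^+ 2) = (fun y => (s ^+ 2)^-1 *: (id y ^+ 2)).
  by apply/funext => y; rewrite /= mulrC.
apply: is_derive_eq.
rewrite -[x%:A]/(x * 1) -[_ *: _]/(_ * _); ring.

Qed.

Lemma der_HOW (s x : R) : s != 0 ->
  is_derive x 1 (rmc_gfun (HOW s)) (rmc_dgfun (HOW s) x).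
Proof.
move=> s0.
set h := fun y : R => - (y ^+ 2 / s ^+ 2).
have hd : is_derive x 1 h (- (2 * x / s ^+ 2)).
  by apply: is_deriveN; apply: der_sq_div.
have ed : is_derive x 1 (expR \o h) (expR (h x) * - (2 * x / s ^+ 2)).
  by apply: is_derive1_comp.
have -> : rmc_gfun (HOW s) = (fun y => (s ^+ 2 / 2) *: (cst 1 - (expR \o h)) y).
  by apply/funext => y.
apply: is_derive_eq.
rewrite /= /h -[_ *: _]/(_ * _); field; exact: s0.
Qed.


Lemma der_HOC (s x : R) : s != 0 ->
  is_derive x 1 (rmc_gfun (HOC s)) (rmc_dgfun (HOC s) x).
Proof.
move=> s0.
set h := fun y : R => 1 + (y ^+ 2 / s ^+ 2).
have hpos : 0 < h x by rewrite /h ltr_pwDl // divr_ge0 // sqr_ge0.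
have hd : is_derive x 1 h (2 * x / s ^+ 2).
  have -> : h = cst 1 + (fun y : R => y ^+ 2 / s ^+ 2) by apply/funext.
  by have := is_deriveD (is_derive_cst (1:R) x 1) (der_sq_div s x); rewrite add0r.
have ed : is_derive x 1 (@ln R \o h) ((h x)^-1 * (2 * x / s ^+ 2)).
  exact: (is_derive1_comp (is_derive1_ln hpos) hd).
have -> : rmc_gfun (HOC s) = (fun y => (s ^+ 2 / 2) *: (@ln R \o h) y).
  by apply/funext => y.
apply: is_derive_eq.
rewrite /= /h -[_ *: _]/(_ * _); field.
by rewrite s0 /= paddr_eq0 ?sqr_ge0 // negb_and sqrf_eq0 s0.
Qed.

Lemma der_HOP (p x : R) : 0 < x ->
  is_derive x 1 (rmc_gfun (HOP p)) (rmc_dgfun (HOP p) x).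
Proof.
move=> x0.
apply: (near_eq_is_derive _ (is_derive1_powR p x0)).
near=> y. rewrite /= gtr0_norm //. near: y. exact: lt_nbhsr.
Unshelve. all: end_near. Qed.

Section K2.
Variable K : rmc_gkind R.
Hypothesis Kok : rmc_gkind_ok K.

Lemma gK_deriv (x : R) : 0 < x -> is_derive x 1 (rmc_gfun K) (rmc_dgfun K x).
Proof.
move=> x0; case: K Kok => [s|s|p] /= hs.
- by apply: der_HOW; rewrite gt_eqF.
- by apply: der_HOC; rewrite gt_eqF.
- exact: der_HOP.
Qed.

Lemma gK_pos (x : R) : 0 < x -> 0 < rmc_dgfun K x.
Proof.
move=> x0; case: K Kok => [s|s|p] /= hs.
- by rewrite mulr_gt0 // expR_gt0.
- by rewrite divr_gt0 // ltr_pwDl // divr_ge0 // sqr_ge0.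
- by case: hs => p0 _; rewrite mulr_gt0 // powR_gt0.
Qed.

Lemma gK_ratio (x y : R) : 0 < x -> x <= y ->
  rmc_dgfun K y / y <= rmc_dgfun K x / x.
Proof.
move=> x0 xy; have y0 : 0 < y by apply: lt_le_trans xy.
case: K Kok => [s|s|p] /= hs.
  rewrite mulrAC [x * _ / x]mulrAC !divff ?gt_eqF // !mul1r. rewrite ler_expR lerN2.
  apply: ler_wpM2r; first by rewrite invr_ge0 sqr_ge0.
  nra.
- rewrite ![_ / (1 + _) / _]mulrAC !divff ?gt_eqF // !mul1r.
  rewrite lef_pV2 ?posrE ?ltr_pwDl // ?divr_ge0 ?sqr_ge0 // lerD2l.
  apply: ler_wpM2r; first by rewrite invr_ge0 sqr_ge0.
  nra.
- case: hs => p0 p1.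
  rewrite -!mulrA; apply: ler_wpM2l; first exact: ltW.
  apply: ler_pM.
  + exact: powR_ge0.
  + by rewrite invr_ge0 ltW.
  + have -> : p - 1 = - (1 - p) by rewrite opprB.
    rewrite !powRN lef_pV2 ?posrE ?powR_gt0 //.
    apply: (ge0_ler_powR _ _ _ xy); rewrite ?nnegrE ?subr_ge0 //; exact: ltW.
  + by rewrite lef_pV2 ?posrE.
Qed.
End K2.

Lemma scaleRE (u v : R) : u *: v = u * v. Proof. by []. Qed.

Lemma mono_deriv (f df : R -> R) (u x : R) : 0 < u -> u <= x ->
  (forall t : R, 0 < t -> is_derive t 1 f (df t)) ->
  (forall t : R, u <= t -> t <= x -> 0 <= df t) -> f u <= f x.
Proof.
move=> u0 ux hd hdf.
have cont : {within `[u, x], continuous f}.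
  apply: derivable_within_continuous => t; rewrite in_itv /= => /andP[ut _].
  by have [] := hd t (lt_le_trans u0 ut).
have hd' : forall t, t \in `]u, x[%R -> is_derive t 1 f (df t).
  move=> t; rewrite in_itv /= => /andP[ut _]; apply: hd.
  exact: lt_trans ut.
have [t] := MVT_segment ux hd' cont.
rewrite in_itv /= => /andP[ut tx] e.
by rewrite -subr_ge0 e mulr_ge0 ?hdf // subr_ge0.
Qed.

Section Scal.
Variable K : rmc_gkind R.
Hypothesis Kok : rmc_gkind_ok K.
Local Notation g := (rmc_gfun K).
Local Notation dg := (rmc_dgfun K).
Local Notation a := (rmc_acoef K).
Local Notation b := (rmc_bcoef K).
Local Notation l := (rmc_lgc K).

Definition FF (c x : R) := x ^+ 2 / 2 - a c * g x - b c.
Definition DD (c x : R) := x - a c * dg x.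

Lemma a_pos (c : R) : 0 < c -> 0 < a c.
Proof. by move=> c0; rewrite /rmc_acoef divr_gt0 // gK_pos. Qed.

Lemma a_dg (c : R) : 0 < c -> a c * dg c = c.
Proof. by move=> c0; rewrite /rmc_acoef divfK // gt_eqF // gK_pos. Qed.

Lemma FF_c (c : R) : FF c c = 0.
Proof. rewrite /FF /rmc_bcoef; ring. Qed.

Lemma DD_c (c : R) : 0 < c -> DD c c = 0.
Proof. by move=> c0; rewrite /DD a_dg // subrr. Qed.

Lemma DD_eq (c s : R) : 0 < s -> DD c s = s * (1 - a c * (dg s / s)).
Proof.
move=> s0; rewrite /DD; field; by rewrite gt_eqF.
Qed.

Lemma DD_ge0 (c s : R) : 0 < c -> c <= s -> 0 <= DD c s.
Proof.
move=> c0 cs; have s0 : 0 < s by apply: lt_le_trans cs.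
rewrite DD_eq //; apply: mulr_ge0; first exact: ltW.
rewrite subr_ge0.
have := @gK_ratio K Kok _ _ c0 cs.
have := a_dg c c0; have := a_pos c c0.
set A := a c; set r1 := dg s / s; set r0 := dg c / c.
have -> : dg c = r0 * c by rewrite /r0 divfK ?gt_eqF.
move=> A0 e h; have e' : A * r0 = 1.
  by apply: (mulIf (negbT (gt_eqF c0))); rewrite -mulrA e mul1r.
by rewrite -e' ler_pM2l.
Qed.

Lemma DD_le0 (c s : R) : 0 < c -> 0 < s -> s <= c -> DD c s <= 0.
Proof.
move=> c0 s0 cs.
rewrite DD_eq // pmulr_rle0 // subr_le0.
have := @gK_ratio K Kok _ _ s0 cs.
have := a_dg c c0; have := a_pos c c0.
set A := a c; set r1 := dg s / s; set r0 := dg c / c.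
have -> : dg c = r0 * c by rewrite /r0 divfK ?gt_eqF.
move=> A0 e h; have e' : A * r0 = 1.
  by apply: (mulIf (negbT (gt_eqF c0))); rewrite -mulrA e mul1r.
by rewrite -e' ler_pM2l.
Qed.

Lemma DD_mono (c s t : R) : 0 < c -> c <= s -> s <= t -> DD c s <= DD c t.
Proof.
move=> c0 cs st; have s0 : 0 < s by apply: lt_le_trans cs.
have t0 : 0 < t by apply: lt_le_trans st.
have h1 := DD_ge0 c s c0 cs.
rewrite !DD_eq // in h1 *.
have h2 := @gK_ratio K Kok _ _ s0 st.
have A0 := a_pos c c0.
have hs : 0 <= 1 - a c * (dg s / s).
  by rewrite (pmulr_rge0 _ s0) in h1.
have hq : a c * (dg t / t) <= a c * (dg s / s) by rewrite (ler_pM2l A0).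
have pq : 1 - a c * (dg s / s) <= 1 - a c * (dg t / t) by rewrite lerD2l lerN2.
exact: le_trans (ler_wpM2r hs st) (ler_wpM2l (ltW t0) pq).
Qed.

Lemma FF_deriv (c t : R) : 0 < t -> is_derive t 1 (FF c) (DD c t).
Proof.
move=> t0.
have -> : FF c = (fun x => (2^-1) *: (id x ^+ 2)) - (a c) *: g - cst (b c).
  by apply/funext => x; rewrite /FF /= mulrC.
have := @gK_deriv K Kok _ t0.
move=> hg.
apply: is_derive_eq.
rewrite /DD !scaleRE subr0; by field.
Qed.

Lemma FFlin_deriv (c k t : R) : 0 < t ->
  is_derive t 1 (FF c - k *: (@id R)) (DD c t - k).
Proof.
move=> t0.
have h := is_deriveB (FF_deriv c t t0) (is_deriveZ k (@is_derive_id _ R t 1)).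
by rewrite scaleRE mulr1 in h.
Qed.

Lemma FF_sub (c u x : R) : 0 < c -> c <= u -> c <= x ->
  FF c u + DD c u * (x - u) <= FF c x.
Proof.
move=> c0 cu cx; have u0 : 0 < u by apply: lt_le_trans cu.
have [ux|xu] := leP u x.
  have := @mono_deriv (FF c - (DD c u) *: (@id R)) (fun t => DD c t - DD c u) u x u0 ux
    (fun t t0 => FFlin_deriv c (DD c u) t t0).
  have h : forall t, u <= t -> t <= x -> 0 <= DD c t - DD c u.
    move=> t ut _; rewrite subr_ge0; exact: DD_mono.
  move/(_ h) => h2.
  have h3 : FF c u - DD c u * u <= FF c x - DD c u * x by exact: h2.
  rewrite mulrBr; lra.
have x0 : 0 < x by apply: lt_le_trans cx.
have := @mono_deriv (- (FF c - (DD c u) *: (@id R))) (fun t => - (DD c t - DD c u)) x u x0 (ltW xu)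
    (fun t t0 => is_deriveN (FFlin_deriv c (DD c u) t t0)).
have h : forall t, x <= t -> t <= u -> 0 <= - (DD c t - DD c u).
  move=> t xt tu; rewrite oppr_ge0 subr_le0; apply: DD_mono => //; exact: (le_trans cx).
move/(_ h) => h2.
have h3 : - (FF c x - DD c u * x) <= - (FF c u - DD c u * u) by exact: h2.
rewrite mulrBr; lra.
Qed.

Lemma FF_ge0 (c x : R) : 0 < c -> c <= x -> 0 <= FF c x.
Proof.
move=> c0 cx; have := FF_sub c c x c0 (lexx c) cx.
by rewrite FF_c DD_c // mul0r add0r.
Qed.

Definition Phi (c x : R) := if x <= c then 0 else FF c x.

Lemma Phi_ge0 (c x : R) : 0 < c -> 0 <= Phi c x.
Proof.
move=> c0; rewrite /Phi; case: (leP x c) => // /ltW h; exact: FF_ge0 c x c0 h.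
Qed.

Lemma lgc_Phi (c t : R) : l c t = t ^+ 2 / 2 - Phi c `|t|.
Proof.
rewrite /rmc_lgc /Phi; case: leP => _; first by rewrite subr0.
rewrite /FF real_normK ?num_real //; ring.
Qed.

Definition ww (c u : R) := if u == 0 then 0 else Num.max 0 (u - a c * dg u).

Lemma ww_ge0 (c u : R) : 0 <= ww c u.
Proof. by rewrite /ww; case: eqP => // _; rewrite le_max lexx. Qed.

Lemma Phi_K2 (c u x : R) : 0 < c -> 0 <= u -> 0 <= x ->
  Phi c u + ww c u * (x - u) <= Phi c x.
Proof.
move=> c0 u0 x0.
have [uc|cu] := leP u c.
  have -> : ww c u = 0.
    rewrite /ww; case: eqP => // /eqP un0.
    have u0' : 0 < u by rewrite lt_def un0 u0.
    have := DD_le0 c u c0 u0' uc; rewrite /DD => h.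
    by apply/max_idPl.
  rewrite /Phi uc mul0r addr0; exact: Phi_ge0.
have u0' : 0 < u by apply: lt_trans cu.
have hD := DD_ge0 c u c0 (ltW cu).
have -> : ww c u = DD c u.
  by rewrite /ww gt_eqF //; apply/max_idPr.
rewrite /Phi (leNgt u) cu /=.
have [xc|cx] := leP x c.
  have := FF_sub c u c c0 (ltW cu) (lexx c); rewrite FF_c => h.
  have : DD c u * (x - u) <= DD c u * (c - u).
    by apply: ler_wpM2l => //; rewrite lerD2r.
  lra.
exact: FF_sub c u x c0 (ltW cu) (ltW cx).
Qed.

Lemma key_ineq (c d t : R) : 0 < c ->
  l c t - (t - rmc_proxgc K c d) ^+ 2 / 2 <= l c d - (d - rmc_proxgc K c d) ^+ 2 / 2.
Proof.
move=> c0.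
have -> : rmc_proxgc K c d = ww c `|d| * Num.sg d.
  rewrite /rmc_proxgc /ww normr_eq0; case: eqP => [->|//]; by rewrite mul0r.
set W := ww c `|d|.
have W0 : 0 <= W := ww_ge0 c `|d|.
have K2 := Phi_K2 c `|d| `|t| c0 (normr_ge0 d) (normr_ge0 t).
have e1 : d * (W * Num.sg d) = W * `|d| by rewrite normrEsg; ring.
have e2 : t * (W * Num.sg d) <= W * `|t|.
  apply: le_trans (ler_norm _) _.
  rewrite !normrM (ger0_norm W0) normr_sg mulrC -mulrA ler_wpM2l //.
  by case: (d != 0); rewrite /= ?mul1r ?mul0r.
rewrite !lgc_Phi.
have : t ^+ 2 / 2 - Phi c `|t| - (t - W * Num.sg d) ^+ 2 / 2 =
  t * (W * Num.sg d) - (W * Num.sg d) ^+ 2 / 2 - Phi c `|t|.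
 by field.
have : d ^+ 2 / 2 - Phi c `|d| - (d - W * Num.sg d) ^+ 2 / 2 =
  d * (W * Num.sg d) - (W * Num.sg d) ^+ 2 / 2 - Phi c `|d| by field.
move=> -> ->; rewrite e1.
have K2' : Phi c `|d| + (W * `|t| - W * `|d|) <= Phi c `|t|.
  by rewrite -mulrBr.
lra.
Qed.

Lemma a_mono (c' c : R) : 0 < c' -> c' <= c -> a c' <= a c.
Proof.
move=> c0 cc; have c0' : 0 < c by apply: lt_le_trans cc.
rewrite /rmc_acoef -(invf_div (dg c')) -(invf_div (dg c)).
rewrite lef_pV2 ?posrE ?divr_gt0 ?gK_pos //.
exact: (@gK_ratio K Kok _ _ c0 cc).
Qed.

Lemma FF_mono_c (c' c x : R) : 0 < c' -> c' <= c -> c <= x -> FF c x <= FF c' x.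
Proof.
move=> c0 cc cx; have c0' : 0 < c by apply: lt_le_trans cc.
have := @mono_deriv (FF c' - FF c) (fun t => DD c' t - DD c t) c x c0' cx
  (fun t t0 => is_deriveB (FF_deriv c' t t0) (FF_deriv c t t0)).
have h : forall t, c <= t -> t <= x -> 0 <= DD c' t - DD c t.
  move=> t ct _; have t0 : 0 < t by apply: lt_le_trans ct.
  have -> : DD c' t - DD c t = (a c - a c') * dg t by rewrite /DD; ring.
  by rewrite mulr_ge0 ?subr_ge0 ?a_mono // ltW // gK_pos.
move/(_ h) => h2.
have h3 : FF c' c - FF c c <= FF c' x - FF c x by exact: h2.
have := FF_ge0 c' c c0 cc; rewrite FF_c in h3; lra.
Qed.

Lemma l_mono_c (c' c t : R) : 0 < c' -> c' <= c -> l c' t <= l c t.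
Proof.
move=> c0 cc; have c0' : 0 < c by apply: lt_le_trans cc.
rewrite !lgc_Phi lerD2l lerN2 /Phi.
case: (leP `|t| c) => tc.
  case: (leP `|t| c') => // /ltW h; exact: FF_ge0 c' `|t| c0 h.
have -> : (`|t| <= c') = false by apply/negbTE; rewrite -ltNge (le_lt_trans cc).
exact: FF_mono_c c' c `|t| c0 cc (ltW tc).
Qed.

Lemma l_ge0 (c t : R) : 0 < c -> 0 <= l c t.
Proof.
move=> c0; rewrite /rmc_lgc; case: (leP `|t| c) => tc.
  by rewrite divr_ge0 // sqr_ge0.
have := @mono_deriv g dg c `|t| c0 (ltW tc) (fun x x0 => @gK_deriv K Kok x x0).
have h : forall x, c <= x -> x <= `|t| -> 0 <= dg x.
  by move=> x cx _; rewrite ltW // gK_pos // (lt_le_trans c0 cx).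
move/(_ h) => h2.
rewrite /rmc_bcoef.
have A0 := a_pos c c0.
have : a c * g c <= a c * g `|t| by rewrite ler_pM2l.
have : 0 <= c ^+ 2 / 2 by rewrite divr_ge0 // sqr_ge0.
lra.
Qed.

Definition Sset (c y : R) := [set l c t - (t - y) ^+ 2 / 2 | t in [set: R]].

Lemma phiE (c y : R) : rmc_phigc K c y = sup (Sset c y).
Proof. by []. Qed.

Lemma Sset_ub_prox (c' c d : R) : 0 < c' -> c' <= c ->
  ubound (Sset c' (rmc_proxgc K c d)) (l c d - (d - rmc_proxgc K c d) ^+ 2 / 2).
Proof.
move=> c0 cc _ [t _ <-].
apply: le_trans (key_ineq c d t (lt_le_trans c0 cc)).
by rewrite lerD2r l_mono_c.
Qed.

Lemma phi_prox (c d : R) : 0 < c ->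
  rmc_phigc K c (rmc_proxgc K c d) = l c d - (d - rmc_proxgc K c d) ^+ 2 / 2.
Proof.
move=> c0; rewrite phiE; apply/le_anti/andP; split.
  apply: ge_sup; first by eexists; exists d.
  exact: (Sset_ub_prox c c d c0 (lexx c)).
apply: (ub_le_sup); last by exists d.
by eexists; exact: (Sset_ub_prox c c d c0 (lexx c)).
Qed.

Lemma phi_ge (c s d : R) : has_ubound (Sset c s) ->
  l c d - (d - s) ^+ 2 / 2 <= rmc_phigc K c s.
Proof. by move=> hb; rewrite phiE; apply: ub_le_sup => //; exists d. Qed.

Lemma phi_mono (c' c s : R) : 0 < c' -> c' <= c -> has_ubound (Sset c s) ->
  has_ubound (Sset c' s) /\ rmc_phigc K c' s <= rmc_phigc K c s.
Proof.
move=> c0 cc hb.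
have ub : ubound (Sset c' s) (rmc_phigc K c s).
  move=> _ [t _ <-]; apply: le_trans (phi_ge c s t hb).
  by rewrite lerD2r l_mono_c.
split; first by eexists; exact: ub.
rewrite (phiE c'); apply: ge_sup => //.
by eexists; exists 0.
Qed.
End Scal.
End K.

Section Mx.
Variable R : realType.
Variables m n : nat.
Variable Om : {set 'I_m * 'I_n}.
Local Notation mask := (@rmc_maskO R m n Om).

Lemma maskE (A : 'M[R]_(m, n)) i j : mask A i j = if (i, j) \in Om then A i j else 0.
Proof. by rewrite mxE. Qed.

Lemma maskD (A B : 'M[R]_(m, n)) : mask (A + B) = mask A + mask B.
Proof. by apply/matrixP => i j; rewrite !mxE; case: ifP; rewrite ?addr0. Qed.

Lemma maskN (A : 'M[R]_(m, n)) : mask (- A) = - mask A.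
Proof. by apply/matrixP => i j; rewrite !mxE; case: ifP; rewrite ?oppr0. Qed.

Lemma maskB (A B : 'M[R]_(m, n)) : mask (A - B) = mask A - mask B.
Proof. by rewrite maskD maskN. Qed.

Lemma maskZ (k : R) (A : 'M[R]_(m, n)) : mask (k *: A) = k *: mask A.
Proof. by apply/matrixP => i j; rewrite !mxE; case: ifP; rewrite ?mulr0. Qed.

Lemma maskK (A : 'M[R]_(m, n)) : mask (mask A) = mask A.
Proof. by apply/matrixP => i j; rewrite !mxE; case: ((i, j) \in Om). Qed.

Lemma minner_tr {p q} (A B : 'M[R]_(p, q)) : rmc_minner A B = \tr (A *m B^T).
Proof.
rewrite /rmc_minner /mxtrace; apply: eq_bigr => i _; rewrite !mxE.
by apply: eq_bigr => j _; rewrite !mxE.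
Qed.

Lemma minner_mask (A B : 'M[R]_(m, n)) : rmc_minner (mask A) B = rmc_minner (mask A) (mask B).
Proof.
rewrite /rmc_minner; apply: eq_bigr => i _; apply: eq_bigr => j _.
by rewrite !mxE; case: ifP; rewrite ?mul0r.
Qed.

Lemma frob2_ge0 {p q} (A : 'M[R]_(p, q)) : 0 <= rmc_frob2 A.
Proof. by apply: sumr_ge0 => i _; apply: sumr_ge0 => j _; exact: sqr_ge0. Qed.

Lemma frob2_expand {p q} (E M : 'M[R]_(p, q)) mu :
  rmc_frob2 (E + mu *: M) = rmc_frob2 E + 2 * mu * rmc_minner E M + mu ^+ 2 * rmc_frob2 M.
Proof.
rewrite /rmc_frob2 /rmc_minner !mulr_sumr -!big_split /=; apply: eq_bigr => i _.
rewrite !mulr_sumr -!big_split /=; apply: eq_bigr => j _.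
rewrite !mxE; ring.
Qed.

Lemma quad_descent {p q} (E M : 'M[R]_(p, q)) (gg : R) :
  rmc_minner E M = - gg ->
  rmc_frob2 (E + (gg / rmc_frob2 M) *: M) <= rmc_frob2 E.
Proof.
move=> hg; rewrite frob2_expand hg -addrA.
have f0 := frob2_ge0 M.
have [->|fn0] := eqVneq (rmc_frob2 M) 0.
  by rewrite invr0 !mulr0 mul0r !addr0.
have fp : 0 < rmc_frob2 M by rewrite lt_def fn0.
set f := rmc_frob2 M.
have -> : 2 * (gg / f) * - gg + (gg / f) ^+ 2 * f = - (gg ^+ 2 / f).
  by field.
have : 0 <= gg ^+ 2 / f by rewrite divr_ge0 // sqr_ge0.
lra.
Qed.

Lemma frob2_mask (A : 'M[R]_(m, n)) :
  rmc_frob2 (mask A) = \sum_(p in Om) A p.1 p.2 ^+ 2.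
Proof.
rewrite /rmc_frob2 pair_bigA /= [RHS]big_mkcond /=; apply: eq_bigr => -[i j] _.
by rewrite /= !mxE; case: ifP => //; rewrite expr0n.
Qed.

Lemma u_step {r} (H : 'M[R]_(m, n)) (U U' T : 'M[R]_(m, r)) (V : 'M[R]_(r, n)) :
  U' = U - (rmc_minner (rmc_gradU Om H U V) T / rmc_frob2 (mask (T *m V))) *: T ->
  rmc_frob2 (mask H - mask (U' *m V)) <= rmc_frob2 (mask H - mask (U *m V)).
Proof.
move=> ->; set gg := rmc_minner _ T.
have -> : mask H - mask ((U - (gg / rmc_frob2 (mask (T *m V))) *: T) *m V) =
    (mask H - mask (U *m V)) + (gg / rmc_frob2 (mask (T *m V))) *: mask (T *m V).
  by rewrite mulmxBl -scalemxAl maskB maskZ opprB addrA addrAC addrC addrA [_ + mask H]addrC.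
apply: quad_descent.
rewrite /gg /rmc_gradU -!maskB -minner_mask !minner_tr.
by rewrite mulNmx linearN opprK trmx_mul mulmxA.
Qed.

Lemma v_step {r} (H : 'M[R]_(m, n)) (U : 'M[R]_(m, r)) (V V' T : 'M[R]_(r, n)) :
  V' = V - (rmc_minner (rmc_gradV Om H U V) T / rmc_frob2 (mask (U *m T))) *: T ->
  rmc_frob2 (mask H - mask (U *m V')) <= rmc_frob2 (mask H - mask (U *m V)).
Proof.
move=> ->; set gg := rmc_minner _ T.
have -> : mask H - mask (U *m (V - (gg / rmc_frob2 (mask (U *m T))) *: T)) =
    (mask H - mask (U *m V)) + (gg / rmc_frob2 (mask (U *m T))) *: mask (U *m T).
  by rewrite mulmxBr -scalemxAr maskB maskZ opprB addrA addrAC addrC addrA [_ + mask H]addrC.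
apply: quad_descent.
rewrite /gg /rmc_gradV -!maskB -minner_mask !minner_tr.
rewrite mulNmx linearN opprK trmx_mul mulmxA.
rewrite -[X in _ = X]/(\tr (U^T *m mask (H - U *m V) *m T^T)).
rewrite -mulmxA mxtrace_mulC.
by rewrite [RHS]mxtrace_mulC mulmxA.
Qed.
End Mx.


Section Obj.
Variable R : realType.
Variable K : rmc_gkind R.
Hypothesis Kok : rmc_gkind_ok K.
Variables m n : nat.
Variable Om : {set 'I_m * 'I_n}.
Local Notation mask := (@rmc_maskO R m n Om).

Lemma Lobj_E (c : R) {r} (X : 'M[R]_(m, n)) (U : 'M[R]_(m, r)) (V : 'M[R]_(r, n)) (S : 'M[R]_(m, n)) :
  rmc_Lobj K c X Om U V S =
  \sum_(p in Om) (2^-1 * (X - U *m V - S) p.1 p.2 ^+ 2 + rmc_phigc K c (S p.1 p.2)).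
Proof.
rewrite /rmc_Lobj -!maskB frob2_mask mulr_sumr -big_split /=.
by apply: eq_bigr => p _; rewrite !mxE.
Qed.

Lemma Lobj_S_step (c : R) {r} (X : 'M[R]_(m, n)) (U : 'M[R]_(m, r)) (V : 'M[R]_(r, n)) (S0 : 'M[R]_(m, n)) : 0 < c ->
  (forall p, p \in Om -> has_ubound (@Sset R K c (S0 p.1 p.2))) ->
  rmc_Lobj K c X Om U V (mask (map_mx (rmc_proxgc K c) (X - U *m V))) <=
  rmc_Lobj K c X Om U V S0.
Proof.
move=> c0 hub; rewrite !Lobj_E; apply: ler_sum => p pO.
rewrite !mxE -surjective_pairing pO.
set D := X p.1 p.2 - \sum_j U p.1 j * V j p.2.
rewrite (@phi_prox R K Kok c D c0).
have := @phi_ge R K c (S0 p.1 p.2) D (hub p pO).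
lra.
Qed.

Lemma Lobj_c_step (c' c : R) {r} (X : 'M[R]_(m, n)) (U : 'M[R]_(m, r)) (V : 'M[R]_(r, n)) (S : 'M[R]_(m, n)) :
  0 < c' -> c' <= c ->
  (forall p, p \in Om -> has_ubound (@Sset R K c (S p.1 p.2))) ->
  rmc_Lobj K c' X Om U V S <= rmc_Lobj K c X Om U V S.
Proof.
move=> c0 cc hub; rewrite !Lobj_E; apply: ler_sum => p pO.
rewrite lerD2l.
by have [] := @phi_mono R K Kok c' c (S p.1 p.2) c0 cc (hub p pO).
Qed.

Lemma Lobj_ge0 (c : R) {r} (X : 'M[R]_(m, n)) (U : 'M[R]_(m, r)) (V : 'M[R]_(r, n)) (S : 'M[R]_(m, n)) :
  0 < c ->
  (forall p, p \in Om -> has_ubound (@Sset R K c (S p.1 p.2))) ->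
  0 <= rmc_Lobj K c X Om U V S.
Proof.
move=> c0 hub; rewrite Lobj_E; apply: sumr_ge0 => p pO.
apply: addr_ge0; first by rewrite mulr_ge0 // sqr_ge0.
have := @phi_ge R K c (S p.1 p.2) (S p.1 p.2) (hub p pO).
have := @l_ge0 R K Kok c (S p.1 p.2) c0.
rewrite subrr expr0n /= mul0r subr0.
lra.
Qed.

Lemma Lobj_first (c : R) {r} (X : 'M[R]_(m, n)) (U : 'M[R]_(m, r)) (V : 'M[R]_(r, n)) (S : 'M[R]_(m, n)) :
  rmc_Lobj K c X Om U V S =
  2^-1 * rmc_frob2 (mask (mask X - mask S) - mask (U *m V)) + \sum_(p in Om) rmc_phigc K c (S p.1 p.2).
Proof.
rewrite /rmc_Lobj maskB !maskK; congr (_ * rmc_frob2 _ + _).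
by rewrite addrAC.
Qed.
End Obj.

Theorem theorem1 (R : realType) (K : rmc_gkind R) (m n r : nat)
  (X : 'M[R]_(m, n)) (Om : {set 'I_m * 'I_n}) (xi : R)
  (U : nat -> 'M[R]_(m, r)) (V : nat -> 'M[R]_(r, n))
  (Sm : nat -> 'M[R]_(m, n)) (c : nat -> R) :
  rmc_gkind_ok K -> 0 < xi ->
  (* step (i): c^k = min{xi d^k, c^{k-1}}, with c^{-1} = +oo *)
  c 0%N = xi * rmc_dscale Om (X - U 0%N *m V 0%N) ->
  (forall k, c k.+1 = Num.min (xi * rmc_dscale Om (X - U k.+1 *m V k.+1)) (c k)) ->
  (* the iteration is well defined: d^k > 0 (so c^k > 0) and the
     matrices to be inverted are invertible *)
  (forall k, 0 < rmc_dscale Om (X - U k *m V k)) ->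
  (forall k, V k *m (V k)^T \in unitmx) ->
  (forall k, (U k.+1)^T *m U k.+1 \in unitmx) ->
  (* step (ii) *)
  (forall k, Sm k.+1 =
     rmc_maskO Om (map_mx (rmc_proxgc K (c k)) (X - U k *m V k))) ->
  (* step (iii) *)
  (forall k,
     let H := rmc_maskO Om X - rmc_maskO Om (Sm k.+1) in
     let gU := rmc_gradU Om H (U k) (V k) in
     let tU := gU *m invmx (V k *m (V k)^T) in
     let muU := rmc_minner gU tU / rmc_frob2 (rmc_maskO Om (tU *m V k)) in
     U k.+1 = U k - muU *: tU) ->
  (forall k,
     let H := rmc_maskO Om X - rmc_maskO Om (Sm k.+1) in
     let gV := rmc_gradV Om H (U k.+1) (V k) in
     let tV := invmx ((U k.+1)^T *m U k.+1) *m gV in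
     let muV := rmc_minner gV tV / rmc_frob2 (rmc_maskO Om (U k.+1 *m tV)) in
     V k.+1 = V k - muV *: tV) ->
  exists l : R,
    (fun k : nat => rmc_Lobj K (c k.+1) X Om (U k.+1) (V k.+1) (Sm k.+1))
      @ \oo --> l.
Proof.
move=> Kok xi0 c0E cS dpos VVu UUu Sdef Ustep Vstep.
have cpos : forall k, 0 < c k.
  elim=> [|k IH]; first by rewrite c0E mulr_gt0.
  by rewrite cS lt_min mulr_gt0 // IH.
have cdec : forall k, c k.+1 <= c k by move=> k; rewrite cS ge_min lexx orbT.
have ubS : forall k c', 0 < c' -> c' <= c k -> forall p, p \in Om ->
    has_ubound (@Sset R K c' (Sm k.+1 p.1 p.2)).
  move=> k c' c'0 cc p pO; rewrite Sdef mxE -surjective_pairing pO mxE.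
  by eexists; exact: (@Sset_ub_prox R K Kok c' (c k) _ c'0 cc).
pose u := fun k => rmc_Lobj K (c k.+1) X Om (U k.+1) (V k.+1) (Sm k.+1).
have step : forall k, u k.+1 <= u k.
  move=> k; rewrite /u.
  apply: le_trans (@Lobj_c_step R K Kok m n Om _ _ _ X _ _ _ (cpos k.+2) (cdec k.+1)
    (ubS k.+1 (c k.+1) (cpos _) (lexx _))) _.
  apply: (@le_trans _ _ (rmc_Lobj K (c k.+1) X Om (U k.+1) (V k.+1) (Sm k.+2))).
    rewrite !(@Lobj_first R K m n Om) lerD2r ler_wpM2l ?invr_ge0 //.
    have hv := Vstep k.+1; cbv zeta in hv.
    have hu := Ustep k.+1; cbv zeta in hu.
    apply: le_trans (@v_step R m n Om _ _ _ _ _ _ hv) _.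
    exact: (@u_step R m n Om _ _ _ _ _ _ hu).
  rewrite [in X in X <= _]Sdef.
  apply: (@Lobj_S_step R K Kok m n Om); first exact: cpos.
  exact: (ubS k (c k.+1) (cpos _) (cdec k)).
exists (inf (u @` setT)).
apply: nonincreasing_cvgn; first by apply/nonincreasing_seqP.
exists 0 => _ [k _ <-].
apply: (@Lobj_ge0 R K Kok m n Om); first exact: cpos.
exact: (ubS k (c k.+1) (cpos _) (cdec k)).
Qed.
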